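(* Let $q \geq 5$ be a prime power and let $\mathcal{X}$ be a plane curve of degree $q-1$ defined over $\mathbb{F}_q$ without $\mathbb{F}_q$-linear components with $\mathrm{N}_q(\mathcal{X}) = (q-1)^2$. Then $$\sum_{i=k_0}^{q-1} (i-k_0)(i-q+2)\,a_i = 3(q-1)^2 - 3k_0.$$ In particular, $(q - k_0 - 1)\,a_{q-1} \geq 3(q-1)^2 - 3k_0$.
   Context: $\mathcal{X}(\mathbb{F}_q)=\mathcal{X}\cap\mathbb{P}^2(\mathbb{F}_q)$, $\mathrm{N}_q(\mathcal{X})=\#\mathcal{X}(\mathbb{F}_q)$; ''without $\mathbb{F}_q$-linear components'' means no line defined over $\mathbb{F}_q$ is a component. For $0\le i\le q+1$, $a_i$ is the number of $\mathbb{F}_q$-lines $l$ with $\#(l\cap\mathcal{X}(\mathbb{F}_q))=i$, and $k_0 := \min\{i : a_i \neq 0\}$. *)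

(* Defs.v *)
From HB Require Import structures.
From mathcomp Require Import all_boot all_order all_algebra all_field.
From mathcomp Require Import mpoly.
Set Implicit Arguments. Unset Strict Implicit. Unset Printing Implicit Defensive.
Import Order.TTheory GRing.Theory Num.Theory.
Local Open Scope ring_scope.

Section PlaneCurves.
Variable F : finFieldType.

(* Points of P^2(F) (and F-lines, via dual coordinates) are represented by
   the normalized homogeneous coordinate triples: first nonzero coordinate = 1. *)
Definition normalized (v : F * F * F) : bool :=
  let: (x, y, z) := v in
  [|| x == 1, (x == 0) && (y == 1) | [&& x == 0, y == 0 & z == 1]].

Definition P2 : {set F * F * F} := [set v | normalized v].

Definition ev3 (v : F * F * F) : 'I_3 -> F :=
  fun i => [:: v.1.1; v.1.2; v.2]`_i.

Definition curve_pts (f : {mpoly F[3]}) : {set F * F * F} :=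
  [set P in P2 | f.@[ev3 P] == 0].

Definition Nq (f : {mpoly F[3]}) : nat := #|curve_pts f|.

Definition on_line (l P : F * F * F) : bool :=
  l.1.1 * P.1.1 + l.1.2 * P.1.2 + l.2 * P.2 == 0.

Definition linform (l : F * F * F) : {mpoly F[3]} :=
  l.1.1%:MP * 'X_0 + l.1.2%:MP * 'X_1 + l.2%:MP * 'X_2.

Definition no_Fq_linear_component (f : {mpoly F[3]}) : Prop :=
  forall l : F * F * F, l != (0, 0, 0) ->
    ~ exists g : {mpoly F[3]}, f = linform l * g.

Definition plane_curve (d : nat) (f : {mpoly F[3]}) : Prop :=
  f != 0 /\ f \is d.-homog.

Definition line_count (f : {mpoly F[3]}) (l : F * F * F) : nat :=
  #|[set P in curve_pts f | on_line l P]|.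

Definition a_ (f : {mpoly F[3]}) (i : nat) : nat :=
  #|[set l in P2 | line_count f l == i]|.

Definition k0 (f : {mpoly F[3]}) : nat :=
  find (fun i => a_ f i != 0%N) (iota 0 (#|F|.+2)).

End PlaneCurves.

(* Main.v *)
Require Import Defs.
From HB Require Import structures.
From mathcomp Require Import all_boot all_order all_algebra all_field.
From mathcomp Require Import mpoly.
From mathcomp Require Import ring zify.
Import Order.TTheory GRing.Theory Num.Theory.
Local Open Scope ring_scope.
Set Implicit Arguments. Unset Strict Implicit. Unset Printing Implicit Defensive.
Section Geo.
Variable F : finFieldType.
Local Notation V := (F * F * F)%type.

Definition dot (l P : V) : F := l.1.1 * P.1.1 + l.1.2 * P.1.2 + l.2 * P.2.
Definition sc (a : F) (v : V) : V := (a * v.1.1, a * v.1.2, a * v.2).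
Definition nrm (v : V) : V :=
  if v.1.1 != 0 then sc (v.1.1)^-1 v else if v.1.2 != 0 then sc (v.1.2)^-1 v
  else sc (v.2)^-1 v.
Definition cross (a b : V) : V :=
  (a.1.2 * b.2 - a.2 * b.1.2, a.2 * b.1.1 - a.1.1 * b.2, a.1.1 * b.1.2 - a.1.2 * b.1.1).

Lemma on_lineE (l P : V) : on_line l P = (dot l P == 0).
Proof. by []. Qed.

Lemma dotC (l P : V) : dot l P = dot P l.
Proof. rewrite /dot; ring. Qed.

Lemma normalizedP (v : V) : normalized v ->
  [\/ v = (1, v.1.2, v.2), v = (0, 1, v.2) | v = (0, 0, 1)].
Proof.
case: v => [[x y] z] /=; case/or3P => [/eqP->|/andP[/eqP-> /eqP->]|/and3P[/eqP-> /eqP-> /eqP->]].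
- by constructor 1.
- by constructor 2.
- by constructor 3.
Qed.

Lemma normalized_neq0 (v : V) : normalized v -> v != (0, 0, 0).
Proof.
by case/normalizedP => ->; rewrite !xpair_eqE oner_eq0 /= ?andbF.
Qed.

Lemma nrm_normalized (v : V) : v != (0,0,0) -> normalized (nrm v).
Proof.
case: v => [[x y] z] /= nz; rewrite /nrm /=.
case: (eqVneq x 0) nz => [->|hx] nz /=; last by rewrite mulVf ?eqxx.
case: (eqVneq y 0) nz => [->|hy] nz /=; last by rewrite mulr0 mulVf ?eqxx ?orbT.
have hz : z != 0 by apply: contraNneq nz => ->.
by rewrite !mulr0 mulVf ?eqxx ?orbT.
Qed.

Lemma nrm_sc (v : V) : v != (0,0,0) -> exists2 a, a != 0 & nrm v = sc a v.
Proof.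
case: v => [[x y] z] /= nz; rewrite /nrm /=.
case: (eqVneq x 0) nz => [->|hx] nz /=; last by exists x^-1; rewrite ?invr_eq0.
case: (eqVneq y 0) nz => [->|hy] nz /=; last by exists y^-1; rewrite ?invr_eq0.
have hz : z != 0 by apply: contraNneq nz => ->.
by exists z^-1; rewrite ?invr_eq0.
Qed.

Lemma nrm_id (v : V) : normalized v -> nrm v = v.
Proof.
case/normalizedP => -> ; rewrite /nrm /= ?oner_eq0 ?eqxx /= /sc /= ?invr1 ?mul1r ?mulr0 //.
Qed.

Lemma nrm_scK (a : F) (v : V) : a != 0 -> nrm (sc a v) = nrm v.
Proof.
have E (z w : F) : a != 0 -> (a * z)^-1 * (a * w) = z^-1 * w.
  by move=> ha; rewrite invfM mulrACA mulVf ?mul1r.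
case: v => [[x y] z] ha; rewrite /nrm /sc /= !mulf_eq0 (negbTE ha) /=.
by rewrite !E.
Qed.

Lemma prop_eq (P Q : V) (a : F) : normalized P -> normalized Q -> P = sc a Q -> P = Q.
Proof.
move=> hP hQ e.
have ha : a != 0.
  apply/eqP => a0; move: (normalized_neq0 hP); rewrite e a0 /sc !mul0r eqxx //.
by rewrite -(nrm_id hP) -(nrm_id hQ) e nrm_scK.
Qed.

Lemma eq_via (x y z : F) : z = 0 -> x - y = z -> x = y.
Proof. by move=> -> /subr0_eq. Qed.
Lemma eq_viaN (x y z : F) : z = 0 -> x - y = - z -> x = y.
Proof. by move=> ->; rewrite oppr0 => /subr0_eq. Qed.

Ltac solve_via e := first [ by ring | by apply: (eq_via e); ring | by apply: (eq_viaN e); ring ].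

Lemma cross0_prop (a b : V) : a != (0,0,0) -> cross a b = (0,0,0) -> exists c, b = sc c a.
Proof.
have H (p x y z : F) : p != 0 -> p * x = y * z -> x = y / p * z.
  by move=> hp e; apply: (mulfI hp); rewrite e; field.
case: a => [[a0 a1] a2]; case: b => [[b0 b1] b2] /= nz [e0 e1 e2].
case: (eqVneq a0 0) nz => [z0|h0] nz.
  case: (eqVneq a1 0) nz => [z1|h1] nz.
    have h2 : a2 != 0 by apply: contraNneq nz => ->; rewrite z0 z1.
    subst a0 a1.
    exists (b2 / a2); rewrite /sc /=; congr (_,_,_); apply: H => //.
    - solve_via e1.
    - solve_via e0.
    - solve_via e0.
  subst a0.
  exists (b1 / a1); rewrite /sc /=; congr (_,_,_); apply: H => //.
  - solve_via e2.
  - solve_via e2.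
  - solve_via e0.
exists (b0 / a0); rewrite /sc /=; congr (_,_,_); apply: H => //.
- solve_via e2.
- solve_via e2.
- solve_via e1.
Qed.


Lemma dot_scl a l P : dot (sc a l) P = a * dot l P.
Proof. rewrite /dot /sc /=; ring. Qed.
Lemma dot_scr a l P : dot l (sc a P) = a * dot l P.
Proof. rewrite /dot /sc /=; ring. Qed.

Lemma cross_dotl a b : dot (cross a b) a = 0.
Proof. rewrite /dot /cross /=; ring. Qed.
Lemma cross_dotr a b : dot (cross a b) b = 0.
Proof. rewrite /dot /cross /=; ring. Qed.

Lemma triple_cross l l' x : dot l x = 0 -> dot l' x = 0 -> cross (cross l l') x = (0,0,0).
Proof.
move=> h h'; rewrite /cross /=; congr (_,_,_).
- transitivity (dot l x * l'.1.1 - dot l' x * l.1.1); last by rewrite h h' !mul0r subr0.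
  rewrite /dot; ring.
- transitivity (dot l x * l'.1.2 - dot l' x * l.1.2); last by rewrite h h' !mul0r subr0.
  rewrite /dot; ring.
- transitivity (dot l x * l'.2 - dot l' x * l.2); last by rewrite h h' !mul0r subr0.
  rewrite /dot; ring.
Qed.

Lemma sc0 (v : V) : sc 0 v = (0,0,0).
Proof. by rewrite /sc !mul0r. Qed.

Lemma nrm_of (P c : V) a : normalized P -> P = sc a c -> P = nrm c.
Proof.
move=> hP e; have ha : a != 0.
  by apply/eqP => a0; move: (normalized_neq0 hP); rewrite e a0 sc0 eqxx.
by rewrite -(nrm_id hP) e nrm_scK.
Qed.

Lemma line_exists (P Q : V) : normalized P -> normalized Q -> P != Q ->
  exists l, [/\ normalized l, dot l P = 0 & dot l Q = 0].
Proof.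
move=> hP hQ nPQ.
have nc : cross P Q != (0,0,0).
  apply/eqP => c0; case: (cross0_prop (normalized_neq0 hP) c0) => a e.
  by move: nPQ; rewrite (prop_eq hQ hP e) eqxx.
case: (nrm_sc nc) => a ha e.
exists (nrm (cross P Q)); split; first exact: nrm_normalized.
  by rewrite e dot_scl cross_dotl mulr0.
by rewrite e dot_scl cross_dotr mulr0.
Qed.

Lemma line_unique (P Q l l' : V) : normalized P -> normalized Q -> P != Q ->
  normalized l -> normalized l' -> dot l P = 0 -> dot l Q = 0 ->
  dot l' P = 0 -> dot l' Q = 0 -> l = l'.
Proof.
move=> hP hQ nPQ hl hl' h1 h2 h3 h4.
case: (eqVneq l l') => // nll.
have nc : cross l l' != (0,0,0).
  apply/eqP => c0; case: (cross0_prop (normalized_neq0 hl) c0) => a e.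
  by move: nll; rewrite (prop_eq hl' hl e) eqxx.
case: (cross0_prop nc (triple_cross h1 h3)) => a ea.
case: (cross0_prop nc (triple_cross h2 h4)) => b eb.
by move: nPQ; rewrite (nrm_of hP ea) (nrm_of hQ eb) eqxx.
Qed.


Definition vadd (a b : V) : V := (a.1.1 + b.1.1, a.1.2 + b.1.2, a.2 + b.2).
Definition crd (v : V) (r : 'I_3) : F := ev3 v r.

Definition pu (l : V) : V := if l.1.1 == 1 then (- l.1.2, 1, 0) else (1, 0, 0).
Definition pw (l : V) : V :=
  if l.1.1 == 1 then (- l.2, 0, 1) else if l.1.2 == 1 then (0, - l.2, 1) else (0, 1, 0).
Definition pe (l : V) : V :=
  if l.1.1 == 1 then (1, 0, 0) else if l.1.2 == 1 then (0, 1, 0) else (0, 0, 1).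
Definition ia (l : V) : 'I_3 := if l.1.1 == 1 then 1 else 0.
Definition ik (l : V) : 'I_3 := if (l.1.1 == 1) || (l.1.2 == 1) then 2 else 1.

Lemma z01 : ((0 : F) == 1) = false.
Proof. by rewrite eq_sym oner_eq0. Qed.

Ltac lcase hl := case/normalizedP: hl => ->; rewrite /pu /pw /pe /ia /ik /crd /ev3 /= ?eqxx ?z01 /=.

Lemma crdD a b r : crd (vadd a b) r = crd a r + crd b r.
Proof. by case: r => [[|[|[|]]] //=]. Qed.
Lemma crdZ c v r : crd (sc c v) r = c * crd v r.
Proof. by case: r => [[|[|[|]]] //=]. Qed.

Lemma crd_ext (a b : V) : (forall r, crd a r = crd b r) -> a = b.
Proof.
case: a => [[a0 a1] a2]; case: b => [[b0 b1] b2] h.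
by move: (h ord0) (h (1 : 'I_3)) (h (2 : 'I_3)); rewrite /crd /ev3 /= => -> -> ->.
Qed.

Lemma decomp l P : normalized l ->
  P = vadd (vadd (sc (crd P (ia l)) (pu l)) (sc (crd P (ik l)) (pw l))) (sc (dot l P) (pe l)).
Proof.
case: P => [[x y] z] hl; lcase hl; rewrite /vadd /sc /crd /ev3 /dot /=; congr (_,_,_); ring.
Qed.

Lemma decomp0 l P : normalized l -> dot l P = 0 ->
  P = vadd (sc (crd P (ia l)) (pu l)) (sc (crd P (ik l)) (pw l)).
Proof.
move=> hl h; rewrite {1}(decomp P hl) h sc0.
by move: (vadd _ (sc _ (pw l))) => [[? ?] ?]; rewrite /vadd /= !addr0.
Qed.

Lemma pu_ia l : normalized l -> crd (pu l) (ia l) = 1.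
Proof. by move=> hl; lcase hl. Qed.
Lemma pu_ik l : normalized l -> crd (pu l) (ik l) = 0.
Proof. by move=> hl; lcase hl. Qed.
Lemma pw_ia l : normalized l -> crd (pw l) (ia l) = 0.
Proof. by move=> hl; lcase hl. Qed.
Lemma pw_ik l : normalized l -> crd (pw l) (ik l) = 1.
Proof. by move=> hl; lcase hl. Qed.
Lemma dot_pu l : normalized l -> dot l (pu l) = 0.
Proof. by move=> hl; lcase hl; rewrite /dot /=; ring. Qed.
Lemma dot_pw l : normalized l -> dot l (pw l) = 0.
Proof. by move=> hl; lcase hl; rewrite /dot /=; ring. Qed.
Lemma dotD l a b : dot l (vadd a b) = dot l a + dot l b.
Proof. rewrite /dot /vadd /=; ring. Qed.


Lemma crd_dec l P r : normalized l -> dot l P = 0 ->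
  crd P r = crd P (ia l) * crd (pu l) r + crd P (ik l) * crd (pw l) r.
Proof. by move=> hl h; rewrite {1}(decomp0 hl h) crdD !crdZ. Qed.

Lemma crd0 r : crd (0,0,0) r = 0.
Proof. by case: r => [[|[|[|]]] //=]. Qed.

Lemma neq0_crd (v : V) r : crd v r != 0 -> v != (0,0,0).
Proof. by apply: contra => /eqP ->; rewrite crd0. Qed.

Definition Ln (l : V) : {set V} := [set P in (@P2 F) | on_line l P].

Definition iot (l : V) (x : option F) : V :=
  match x with Some t => nrm (vadd (pu l) (sc t (pw l))) | None => nrm (pw l) end.
Definition psi (l : V) (P : V) : option F :=
  if crd P (ia l) == 0 then None else Some (crd P (ik l) / crd P (ia l)).

Lemma crd_nrm (v : V) : v != (0,0,0) -> exists2 a, a != 0 & forall r, crd (nrm v) r = a * crd v r.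
Proof. by move=> nz; case: (nrm_sc nz) => a ha ->; exists a => // r; rewrite crdZ. Qed.

Lemma iot_nz l t : normalized l -> vadd (pu l) (sc t (pw l)) != (0,0,0).
Proof.
by move=> hl; apply: (@neq0_crd _ (ia l)); rewrite crdD crdZ pu_ia // pw_ia // mulr0 addr0 oner_eq0.
Qed.
Lemma pw_nz l : normalized l -> pw l != (0,0,0).
Proof. by move=> hl; apply: (@neq0_crd _ (ik l)); rewrite pw_ik // oner_eq0. Qed.

Lemma iot_in l x : normalized l -> iot l x \in Ln l.
Proof.
move=> hl; rewrite inE /P2 inE /on_line -/(dot _ _).
case: x => [t|] /=.
  rewrite nrm_normalized ?iot_nz //=.
  case: (nrm_sc (iot_nz t hl)) => a _ ->.
  by rewrite dot_scr dotD dot_scr dot_pu // dot_pw // !mulr0 addr0 mulr0.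
rewrite nrm_normalized ?pw_nz //=.
case: (nrm_sc (pw_nz hl)) => a _ ->.
by rewrite dot_scr dot_pw // mulr0.
Qed.

Lemma psi_iot l x : normalized l -> psi l (iot l x) = x.
Proof.
move=> hl; rewrite /psi; case: x => [t|] /=.
  case: (crd_nrm (iot_nz t hl)) => a ha E; rewrite !E.
  rewrite !crdD !crdZ pu_ia // pw_ia // pu_ik // pw_ik // mulr0 addr0 mulr1 mulr1 add0r.
  by rewrite (negbTE ha); congr Some; field.
case: (crd_nrm (pw_nz hl)) => a ha E; rewrite !E.
by rewrite pw_ia // mulr0 eqxx.
Qed.

Lemma psi_inj l : normalized l -> {in Ln l &, injective (psi l)}.
Proof.
move=> hl P Q; rewrite !inE /on_line -!/(dot _ _) => /andP[hP dP] /andP[hQ dQ].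
move/eqP: dP => dP; move/eqP: dQ => dQ.
have eP := crd_dec _ hl dP; have eQ := crd_dec _ hl dQ.
rewrite /psi.
case: (eqVneq (crd P (ia l)) 0) => aP; case: (eqVneq (crd Q (ia l)) 0) => aQ // e.
  have bQ : crd Q (ik l) != 0.
    move: (normalized_neq0 hQ); apply: contraNneq => bQ; apply/eqP; apply: crd_ext => r.
    by rewrite eQ aQ bQ !mul0r addr0 crd0.
  apply: (prop_eq (a := crd P (ik l) / crd Q (ik l)) hP hQ); apply: crd_ext => r.
  rewrite crdZ (eP r) (eQ r) aP aQ !mul0r !add0r; field; exact: bQ.
case: e => e.
apply: (prop_eq (a := crd P (ia l) / crd Q (ia l)) hP hQ); apply: crd_ext => r.
rewrite crdZ (eP r) (eQ r).
have -> : crd P (ik l) = crd P (ia l) * (crd Q (ik l) / crd Q (ia l)).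
  by rewrite -e; field.
by field.
Qed.

Lemma card_Ln l : normalized l -> #|Ln l| = #|F|.+1.
Proof.
move=> hl; apply/eqP; rewrite eqn_leq; apply/andP; split.
  rewrite -(card_in_imset (psi_inj hl)) -card_option; exact: max_card.
rewrite -card_option.
have inj : injective (iot l) by apply: (can_inj (g := psi l)) => x; exact: psi_iot.
rewrite -(card_imset _ inj); apply: subset_leq_card; apply/subsetP => P /imsetP [x _ ->].
exact: iot_in.
Qed.

End Geo.
Section Alg.
Variable F : finFieldType.
Local Notation V := (F * F * F)%type.
Ltac lcase hl := case/normalizedP: hl => ->; rewrite /pu /pw /pe /ia /ik /crd /ev3 /= ?eqxx ?z01 /=.

Definition linT (l : V) : 3.-tuple {mpoly F[2]} :=
  [tuple (crd (pu l) r)%:MP * 'X_0 + (crd (pw l) r)%:MP * 'X_1 | r < 3].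
Definition T2 (l : V) : 2.-tuple {mpoly F[3]} := [tuple 'X_(ia l); 'X_(ik l)].

Lemma linT_T2 l r : tnth (linT l) r \mPo T2 l =
  (crd (pu l) r)%:MP * 'X_(ia l) + (crd (pw l) r)%:MP * 'X_(ik l).
Proof.
rewrite tnth_mktuple comp_mpolyD !rmorphM /= !comp_mpolyC !comp_mpolyXU.
by [].
Qed.

Lemma X_decomp l r : normalized l ->
  'X_r - ((crd (pu l) r)%:MP * 'X_(ia l) + (crd (pw l) r)%:MP * 'X_(ik l))
  = linform l * (crd (pe l) r)%:MP :> {mpoly F[3]}.
Proof.
move=> hl; rewrite /linform; case: r => [[|[|[|//]]] ?];
  lcase hl; rewrite ?rmorphN /=; ring.
Qed.

Lemma ideal_lem l (p : {mpoly F[3]}) : normalized l ->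
  exists g, p - ((p \mPo linT l) \mPo T2 l) = linform l * g.
Proof.
move=> hl; set Lf := linform l.
have Hmul (a a' b b' : {mpoly F[3]}) : (exists g, a - a' = Lf * g) ->
    (exists g, b - b' = Lf * g) -> exists g, a * b - a' * b' = Lf * g.
  case=> ga ea [gb eb]; exists (ga * b + a' * gb).
  move/eqP: ea; rewrite subr_eq => /eqP ->; move/eqP: eb; rewrite subr_eq => /eqP ->.
  ring.
have Hpow (a a' : {mpoly F[3]}) n : (exists g, a - a' = Lf * g) ->
    exists g, a ^+ n - a' ^+ n = Lf * g.
  move=> h; elim: n => [|n IH]; first by exists 0; rewrite !expr0 subrr mulr0.
  by rewrite !exprS; apply: Hmul.
have key (r : 'I_3) : exists g, 'X_r - (tnth (linT l) r \mPo T2 l) = Lf * g.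
  by exists (crd (pe l) r)%:MP; rewrite linT_T2 X_decomp.
have Hmon m : exists g, 'X_[m] - (('X_[m] \mPo linT l) \mPo T2 l) = Lf * g.
  rewrite comp_mpolyX {1}mpolyXE_id rmorph_prod /=.
  elim/big_rec2: _ => [|i x y _ IH]; first by exists 0; rewrite subrr mulr0.
  by apply: Hmul => //; rewrite rmorphXn /=; apply: Hpow.
have E : (p \mPo linT l) \mPo T2 l =
    \sum_(m <- msupp p) p@_m *: (('X_[m] \mPo linT l) \mPo T2 l).
  rewrite {1}(mpolyE p) (raddf_sum (comp_mpoly (linT l))) (raddf_sum (comp_mpoly (T2 l))).
  apply: eq_bigr => m _.
  exact: (etrans (congr1 (comp_mpoly (T2 l)) (comp_mpolyZ (p@_m) ('X_[m]) (linT l))) (comp_mpolyZ _ _ _)).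
rewrite E {1}(mpolyE p) -sumrB.
elim/big_ind: _ => [|x y [gx ->] [gy ->]|m _]; first by exists 0; rewrite mulr0.
  by exists (gx + gy); rewrite mulrDr.
case: (Hmon m) => g eg; exists (p@_m *: g).
by rewrite -scalerBr eg scalerAr.
Qed.

Lemma linT_homog l r : tnth (linT l) r \is 1.-homog.
Proof.
by rewrite tnth_mktuple !mul_mpolyC; apply: rpredD; apply: rpredZ; rewrite dhomogX; apply/eqP; exact: mdeg1.
Qed.

Lemma rho_homog l (f : {mpoly F[3]}) d : f \is d.-homog -> (f \mPo linT l) \is d.-homog.
Proof.
move=> hf; rewrite comp_mpolyEX big_seq; apply: rpred_sum => m hm; apply: rpredZ.
have e : (\sum_i m i)%N = d by rewrite -mdegE; exact: (dhomog_mf hf hm : mdeg m = d).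
rewrite comp_mpolyX -e.
elim/big_rec2: _ => [|i x y _ IH]; first exact: dhomog1.
apply: dhomogM => //; by have := dhomogMn (m i) (linT_homog l i); rewrite mul1n.
Qed.

Lemma meval_sc n (f : {mpoly F[n]}) d (a : F) v : f \is d.-homog ->
  f.@[fun i => a * v i] = a ^+ d * f.@[v].
Proof.
move=> hf; rewrite !mevalE mulr_sumr; apply: eq_big_seq => m hm.
rewrite (eq_bigr (fun i => a ^+ m i * v i ^+ m i)); last by move=> i _; rewrite exprMn.
by rewrite big_split /= prodrXr -mdegE (dhomog_mf hf hm) mulrCA.
Qed.

Notation o1 := (@Ordinal 2 1 isT).
Definition v2 (a b : F) : 'I_2 -> F := fun i => if val i == 0%N then a else b.

Definition bp (B : {mpoly F[2]}) : {poly F} :=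
  \sum_(m <- msupp B) B@_m *: 'X^(m o1).

Lemma mdeg2 (m : 'X_{1..2}) : mdeg m = (m ord0 + m o1)%N.
Proof. rewrite mdegE !big_ord_recl big_ord0 addn0; congr (_ + m _)%N; exact: val_inj. Qed.

Lemma hom2 (B : {mpoly F[2]}) d m : B \is d.-homog -> m \in msupp B -> (m ord0 + m o1 = d)%N.
Proof. by move=> hB hm; rewrite -mdeg2; exact: (dhomog_mf hB hm : mdeg m = d). Qed.

Lemma prod2 (G : 'I_2 -> F) : \prod_(i < 2) G i = G ord0 * G o1.
Proof. rewrite !big_ord_recl big_ord0 mulr1; congr (_ * G _); exact: val_inj. Qed.

Lemma bp_horner B t : (bp B).[t] = B.@[v2 1 t].
Proof.
rewrite /bp horner_sum mevalE; apply: eq_bigr => m _.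
by rewrite hornerZ hornerXn prod2 /v2 /= expr1n mul1r.
Qed.

Lemma bp_coef B r : (bp B)`_r = \sum_(m <- msupp B | m o1 == r) B@_m.
Proof. by rewrite /bp coef_sumMXn. Qed.

Lemma bp_size B d : B \is d.-homog -> (size (bp B) <= d.+1)%N.
Proof.
move=> hB; apply/leq_sizeP => j hj; rewrite bp_coef big_seq_cond big1 // => m /andP[hm /eqP e].
move: (hom2 hB hm) => e2; exfalso; move: hj; rewrite -e -e2; lia.
Qed.

Lemma bp_top B d : B \is d.-homog -> (bp B)`_d = B.@[v2 0 1].
Proof.
move=> hB; rewrite bp_coef mevalE big_mkcond /=; apply: eq_big_seq => m hm.
move: (hom2 hB hm) => e2.
rewrite prod2 /v2 /= expr1n mulr1 expr0n.
have -> : (m o1 == d) = (m ord0 == 0%N) by apply/eqP/eqP; lia.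
by case: (m ord0 == 0%N); rewrite ?mulr1 ?mulr0.
Qed.

Lemma bp_eq0 B d : B \is d.-homog -> bp B = 0 -> B = 0.
Proof.
move=> hB h0; apply/eqP; rewrite -msupp_eq0; apply/eqP.
case E: (msupp B) => [//|m s].
have hm : m \in msupp B by rewrite E inE eqxx.
have := congr1 (fun p : {poly F} => p`_(m o1)) h0; rewrite /= coef0 bp_coef.
rewrite big_mkcond (bigD1_seq m) ?msupp_uniq //= eqxx big_seq_cond big1 ?addr0.
  by move=> h; move: hm; rewrite mcoeff_msupp h eqxx.
move=> m' /andP[hm' ne]; case: eqP => // e; exfalso; move: ne; apply/negP; rewrite negbK.
apply/eqP/mnmP => i.
move: (hom2 hB hm) (hom2 hB hm') => e1 e1'.
case: i => [[|[|//]] hi].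
  have -> : Ordinal hi = ord0 :> 'I_2 by apply: val_inj.
  lia.
have -> : Ordinal hi = o1 by apply: val_inj.
lia.
Qed.

Lemma binary_zero (B : {mpoly F[2]}) d : B \is d.-homog ->
  (d.+1 <= #|[set t | B.@[v2 1%R t] == 0%R]| + (B.@[v2 0%R 1%R] == 0%R))%N -> B = 0.
Proof.
move=> hB hc; apply: (bp_eq0 hB); apply/eqP; apply/negPn/negP => nz.
set Z := [set t | B.@[v2 1 t] == 0] in hc.
have hr : all (root (bp B)) (enum Z).
  by apply/allP => t; rewrite mem_enum inE /root bp_horner.
have := max_poly_roots nz hr (enum_uniq _); rewrite -cardE.
have hs := bp_size hB.
case: eqP hc => e hc; rewrite /nat_of_bool in hc.
  have hs' : (size (bp B) <= d)%N.
    apply/leq_sizeP => j; rewrite leq_eqVlt => /orP[/eqP <-|hj].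
      by rewrite (bp_top hB) e.
    by move/leq_sizeP: hs; apply.
  move=> /leq_trans/(_ hs') => h; lia.
move=> /leq_trans/(_ hs) => h; lia.
Qed.
End Alg.
Section Line.
Variable F : finFieldType.
Local Notation V := (F * F * F)%type.

Lemma Beval l (f : {mpoly F[3]}) a b :
  (f \mPo linT l).@[v2 a b] = f.@[ev3 (vadd (sc a (pu l)) (sc b (pw l)))].
Proof.
rewrite comp_mpoly_meval; apply: meval_eq => r.
rewrite tnth_mktuple mevalD !mevalM !mevalC !mevalXU /v2 /=.
rewrite -/(crd _ r) crdD !crdZ; ring.
Qed.

Lemma feval_sc (f : {mpoly F[3]}) d a v : f \is d.-homog ->
  f.@[ev3 (sc a v)] = a ^+ d * f.@[ev3 v].
Proof.
move=> hf; rewrite -(meval_sc _ _ hf); apply: meval_eq => i; exact: crdZ.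
Qed.

Lemma line_bound (f : {mpoly F[3]}) l :
  f \is (#|F|.-1).-homog -> no_Fq_linear_component f -> normalized l ->
  (line_count f l <= #|F|.-1)%N.
Proof.
move=> hf hnl hl; set d := #|F|.-1.
rewrite leqNgt; apply/negP => hc.
set B := f \mPo linT l.
have hB : B \is d.-homog by exact: rho_homog.
set Z := [set t | B.@[v2 1 t] == 0].
set CL := [set P in curve_pts f | on_line l P].
have sub : psi l @: CL \subset (Some @: Z) :|: (if B.@[v2 0 1] == 0 then [set None] else set0).
  apply/subsetP => x /imsetP [P]; rewrite inE => /andP[]; rewrite /curve_pts inE => /andP[hP fP].
  rewrite /on_line -/(dot _ _) => /eqP dP ->.
  have eP r := crd_dec r hl dP.
  have hPn : normalized P by move: hP; rewrite /P2 inE.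
  rewrite /psi; case: eqP => aP.
    have bP : crd P (ik l) != 0.
      move: (normalized_neq0 hPn); apply: contraNneq => bP; apply/eqP; apply: crd_ext => r.
      by rewrite eP aP bP !mul0r addr0 crd0.
    have : P = sc (crd P (ik l)) (vadd (sc 0 (pu l)) (sc 1 (pw l))).
      by apply: crd_ext => r; rewrite eP crdZ crdD !crdZ aP; ring.
    move=> e; move: fP; rewrite {1}e (feval_sc _ _ hf) -Beval mulf_eq0 expf_eq0 (negbTE bP) andbF /=.
    by move=> ->; rewrite !inE eqxx orbT.
  have : P = sc (crd P (ia l)) (vadd (sc 1 (pu l)) (sc (crd P (ik l) / crd P (ia l)) (pw l))).
    apply: crd_ext => r; rewrite eP crdZ crdD !crdZ; field; exact/eqP.
  move=> e; move: fP; rewrite {1}e (feval_sc _ _ hf) -Beval mulf_eq0 expf_eq0.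
  move/eqP: aP => aP; rewrite (negbTE aP) andbF /= => hz.
  apply/setUP; left; apply/imsetP; exists (crd P (ik l) / crd P (ia l)) => //.
  by rewrite inE.
have cCL : #|CL| = #|psi l @: CL|.
  rewrite card_in_imset // => P Q hP hQ; apply: (psi_inj hl).
    by move: hP; rewrite /CL /curve_pts /Ln !inE => /andP[/andP[-> _] ->].
  by move: hQ; rewrite /CL /curve_pts /Ln !inE => /andP[/andP[-> _] ->].
have := subset_leq_card sub; rewrite -cCL => h1.
have h2 := leq_trans h1 (leq_card_setU _ _).
rewrite card_imset in h2; last exact: Some_inj.
have h3 : (d.+1 <= #|Z| + (B.@[v2 0%R 1%R] == 0%R))%N.
  move: h2 hc; rewrite /line_count -/CL.
  case: (B.@[v2 0 1] == 0); rewrite ?cards1 ?cards0 /=; lia.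
have B0 := binary_zero hB h3.
case: (ideal_lem f hl) => g; rewrite -/B B0 comp_mpoly0 subr0 => eg.
by apply: (hnl l (normalized_neq0 hl)); exists g.
Qed.

End Line.
Section Count.
Variable F : finFieldType.
Local Notation V := (F * F * F)%type.

Lemma card_sum (T : finType) (A : {set T}) (p : pred T) :
  #|[set x in A | p x]| = (\sum_(x in A) p x)%N.
Proof.
rewrite -sum1_card big_mkcond [RHS]big_mkcond; apply: eq_bigr => x _.
by rewrite inE; case: (x \in A); case: (p x).
Qed.

Lemma card_P2 : #|(@P2 F)| = (#|F| ^ 2 + #|F| + 1)%N.
Proof.
pose S1 : {set V} := setX (setX [set 1] setT) setT.
pose S2 : {set V} := setX (setX [set 0] [set 1]) setT.
pose S3 : {set V} := [set (0,0,1)].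
have -> : (@P2 F) = S1 :|: (S2 :|: S3).
  apply/setP => [[[x y] z]]; rewrite /P2 !inE /= !xpair_eqE.
  by case: (x == 1); case: (x == 0); case: (y == 1); case: (y == 0); case: (z == 1).
rewrite cardsU (cardsU S2).
have -> : S2 :&: S3 = set0.
  apply/setP => [[[x y] z]]; rewrite !inE /= !xpair_eqE.
  by case: (y == 1) / eqP => [->|]; rewrite ?andbF // eq_sym oner_eq0 !andbF.
have -> : S1 :&: (S2 :|: S3) = set0.
  apply/setP => [[[x y] z]]; rewrite !inE /= !xpair_eqE.
  by case: (x == 1) / eqP => [->|]; rewrite ?andbF // oner_eq0 !andbF.
by rewrite !cards0 !subn0 /S1 /S2 /S3 !cardsX !cards1 !cardsT !mul1n expnS expn1 addnA.
Qed.


Lemma curve_P2 (f : {mpoly F[3]}) P : P \in curve_pts f -> normalized P.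
Proof. by rewrite /curve_pts /P2 !inE => /andP[]. Qed.

Lemma pencil P : normalized P -> #|[set l in (@P2 F) | on_line l P]| = #|F|.+1.
Proof.
move=> hP; rewrite -(card_Ln hP); apply: eq_card => l.
by rewrite /Ln !inE /on_line -!/(dot _ _) dotC.
Qed.

Lemma E1 (f : {mpoly F[3]}) :
  (\sum_(l in (@P2 F)) line_count f l = #|curve_pts f| * #|F|.+1)%N.
Proof.
rewrite /line_count (eq_bigr (fun l => \sum_(P in curve_pts f) on_line l P)%N); last first.
  by move=> l _; rewrite card_sum.
rewrite exchange_big /= -sum_nat_const; apply: eq_bigr => P hP.
by rewrite -card_sum pencil // (curve_P2 hP).
Qed.

Lemma two_points P Q : normalized P -> normalized Q -> P != Q ->
  #|[set l in (@P2 F) | on_line l P && on_line l Q]| = 1%N.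
Proof.
move=> hP hQ nPQ; case: (line_exists hP hQ nPQ) => l0 [h0 d0P d0Q].
rewrite -(cards1 l0); apply: eq_card => l; rewrite /P2 !inE /on_line -!/(dot _ _).
apply/idP/idP.
  case/andP => hl /andP[/eqP dP /eqP dQ].
  by apply/eqP; exact: (line_unique hP hQ nPQ hl h0 dP dQ d0P d0Q).
by move/eqP ->; rewrite h0 d0P d0Q eqxx.
Qed.

Lemma E2 (f : {mpoly F[3]}) :
  (\sum_(l in (@P2 F)) line_count f l * (line_count f l).-1 =
   #|curve_pts f| * (#|curve_pts f|).-1)%N.
Proof.
set C := curve_pts f.
have stepa l : (line_count f l * (line_count f l).-1 =
    \sum_(P in C) \sum_(Q in C) (on_line l P && on_line l Q && (P != Q)))%N.
  set S := [set P in C | on_line l P].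
  have inner P : P \in C -> (\sum_(Q in C) (on_line l P && on_line l Q && (P != Q)) =
      on_line l P * (#|S|).-1)%N.
    move=> hP; case hb: (on_line l P) => /=; last by rewrite big1 // mul0n.
    rewrite mul1n -card_sum (cardsD1 P S) inE hP hb /= ?add0n.
    apply: eq_card => Q; rewrite !inE.
    by rewrite [Q == P]eq_sym; case: (P == Q); case: (on_line l Q); case: (normalized Q && _).
  rewrite (eq_bigr _ inner) -big_distrl /= -card_sum.
  by rewrite /line_count.
rewrite (eq_bigr _ (fun l _ => stepa l)) exchange_big /=.
rewrite (eq_bigr (fun P => \sum_(Q in C) (P != Q))%N); last first.
  move=> P hP; rewrite exchange_big /=; apply: eq_bigr => Q hQ.
  case: (eqVneq P Q) => [->|nPQ]; first by rewrite big1 // => l _; rewrite andbF.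
  rewrite /= -[RHS]/1%N -(two_points (curve_P2 hP) (curve_P2 hQ) nPQ) card_sum.
  by apply: eq_bigr => l _; rewrite andbT.
rewrite -sum_nat_const; apply: eq_bigr => P hP.
rewrite -card_sum (cardsD1 P C) hP add1n /=.
by apply: eq_card => Q; rewrite !inE andbC eq_sym.
Qed.
End Count.
Lemma Posz_sum (I : finType) (A : pred I) (G : I -> nat) :
  ((\sum_(i in A) G i)%N)%:Z = \sum_(i in A) (G i)%:Z.
Proof. by rewrite (big_morph Posz PoszD (erefl _)). Qed.

Lemma predM_int (n : nat) : ((n * n.-1)%N)%:Z = n%:Z * (n%:Z - 1).
Proof. by case: n => [|n] //=; rewrite PoszM mulrC /= -addn1 PoszD addrK mulrC. Qed.

Unset Implicit Arguments.
Set Strict Implicit.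

Theorem lemma3p14 (F : finFieldType) (f : {mpoly F[3]}) :
  (5 <= #|F|)%N ->
  plane_curve #|F|.-1 f ->
  no_Fq_linear_component f ->
  Nq f = (#|F|.-1 ^ 2)%N ->
  let q := #|F| in
  let k := k0 f in
  (\sum_(k <= i < q) ((i%:Z - k%:Z) * (i%:Z - q%:Z + 2) * (a_ f i)%:Z)
     = 3 * (q%:Z - 1) ^+ 2 - 3 * k%:Z)
  /\ ((q%:Z - k%:Z - 1) * (a_ f q.-1)%:Z >= 3 * (q%:Z - 1) ^+ 2 - 3 * k%:Z).
Proof.
move=> hq [fnz hf] hnl hN q k.
set lc := line_count f.
have hb l : l \in (@P2 F) -> (lc l <= q.-1)%N.
  by rewrite /P2 inE => hl; apply: line_bound.
have hk l : l \in (@P2 F) -> (k <= lc l)%N.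
  move=> hl; rewrite leqNgt; apply/negP => lt.
  have := before_find 0%N lt; rewrite nth_iota; last first.
    by move: (hb l hl); rewrite /q; lia.
  rewrite add0n /a_ => /negbFE; rewrite cards_eq0 => /eqP /setP /(_ l).
  by rewrite in_set0 in_set hl /= eqxx.
set g := fun i : nat => (i%:Z - k%:Z) * (i%:Z - q%:Z + 2).
have claim1 : \sum_(k <= i < q) (g i * (a_ f i)%:Z) = \sum_(l in (@P2 F)) g (lc l).
  have ea i : (a_ f i)%:Z = \sum_(l in (@P2 F)) ((lc l == i) : nat)%:Z.
    by rewrite /a_ card_sum Posz_sum.
  rewrite (eq_bigr (fun i => \sum_(l in (@P2 F)) g i * ((lc l == i) : nat)%:Z)); last first.
    by move=> i _; rewrite ea mulr_sumr.
  rewrite exchange_big /=; apply: eq_bigr => l hl.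
  have mem : lc l \in index_iota k q.
    rewrite mem_index_iota (hk l hl) /=; move: (hb l hl); rewrite /q; lia.
  rewrite (bigD1_seq (lc l)) ?iota_uniq //= eqxx mulr1 big1 ?addr0 // => i ne.
  by rewrite eq_sym (negbTE ne) mulr0.
have e0 := card_P2 F.
have e1 := E1 f.
have e2 := E2 f.
rewrite /Nq in hN; rewrite -/lc hN in e1 e2.
have hq1 : q%:Z - 1 = (q.-1)%:Z by rewrite predn_int //; rewrite /q; lia.
have part1 : \sum_(l in (@P2 F)) g (lc l) = 3 * (q%:Z - 1) ^+ 2 - 3 * k%:Z.
  have -> : \sum_(l in (@P2 F)) g (lc l) =
     \sum_(l in (@P2 F)) (((lc l * (lc l).-1)%N)%:Z + (3 - k%:Z - q%:Z) * (lc l)%:Z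
        + k%:Z * (q%:Z - 2)).
    by apply: eq_bigr => l _; rewrite predM_int /g; ring.
  rewrite !big_split /= -Posz_sum e2 -mulr_sumr -Posz_sum e1 sumr_const.
  rewrite e0 predM_int -[(k%:Z * _) *+ _]mulr_natr natz !PoszD !expnS !expn0 !muln1 !PoszM -hq1 intS -/q.
  ring.
split; first by rewrite claim1.
rewrite -part1 /a_ card_sum Posz_sum mulr_sumr; apply: ler_sum => l hl.
have h1 := hb l hl; have h2 := hk l hl.
case: eqP => e.
  rewrite /g /lc e -hq1.
  suff -> : (q%:Z - 1 - k%:Z) * (q%:Z - 1 - q%:Z + 2) = (q%:Z - k%:Z - 1) * (true : nat)%:Z by rewrite lexx.
  rewrite /= -[Posz 1]/(1 : int) mulr1; ring.
rewrite mulr0 /g; apply: mulr_ge0_le0.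
  rewrite subr_ge0 lez_nat //.
have : (lc l + 2 <= q)%N by move: h1 e; rewrite /lc /q; lia.
move=> h; rewrite -subr_ge0; lia.
Qed.
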